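(* Let $k\ge 1$ be an integer and $p>0$ a budget. For $j=1,\dots,k$ let $n_j>0$ (number of training samples of the $j$-th low-fidelity model) with $p-\sum_{j=1}^k n_j>0$, and let $\rho_j(n_j)\in[-1,1]$ and $w_j(n_j)>0$ be given numbers (correlation coefficient with the high-fidelity model and evaluation cost of the $j$-th low-fidelity model), with the conventions $n_0=0$, $\rho_0=1$, $w_0=1$, $\rho_{k+1}=0$, and assume $1=|\rho_0|>|\rho_1(n_1)|>\dots>|\rho_k(n_k)|$. Let $\sigma_0^2>0$. Suppose that for each $j=1,\dots,k$ there are constants $c_{a,j},c_{c,j}>0$, a positive, decreasing, at least twice continuously differentiable $r_{a,j}:(0,\infty)\to(0,\infty)$ and a positive, increasing, at least twice continuously differentiable $r_{c,j}:(0,\infty)\to(0,\infty)$ with $$1-\rho_j^2(n_j)\le c_{a,j}r_{a,j}(n_j),\qquad w_j(n_j)\le c_{c,j}r_{c,j}(n_j).$$ Define $$\mathrm{MSE}=\frac{\sigma_0^2}{p-\sum_{i=1}^k n_i}\left(\sum_{j=0}^k\sqrt{w_j(n_j)\big(\rho_j^2(n_j)-\rho_{j+1}^2(n_{j+1})\big)}\right)^2.$$ Then $$\mathrm{MSE}\le \frac{(k+1)\sigma_0^2}{p_{k-1}-n_k}\Big(\kappa_{k-1}+w_{k-1}(n_{k-1})\,c_{a,k}\,r_{a,k}(n_k)+c_{c,k}\,r_{c,k}(n_k)\Big),$$ where $$p_{k-1}=p-\sum_{j=1}^{k-1}n_j\ (p_0=p),\qquad \kappa_{k-1}=\sum_{j=0}^{k-2}w_j(n_j)\big(1-\rho_{j+1}^2(n_{j+1})\big)\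 (\kappa_0=0).$$
   Context: The quantity $\mathrm{MSE}$ is the mean-squared error of the context-aware multi-fidelity Monte Carlo estimator of $\mathbb{E}[f^{(0)}(\boldsymbol\Theta)]$ built from a high-fidelity model $f^{(0)}$ (output variance $\sigma_0^2$, cost $1$) and $k$ low-fidelity models $f^{(j)}_{n_j}$ trained with $n_j$ high-fidelity evaluations each, after optimal allocation of the remaining budget $p-\sum n_i$ to sampling. *)

(* Defs.v *)
From Stdlib Require Import Reals.
From Coquelicot Require Import Coquelicot.
Open Scope R_scope.

Fixpoint sum_lt (f : nat -> R) (m : nat) : R :=
  match m with
  | O => 0
  | S m' => sum_lt f m' + f m'
  end.

(* Extension of the index-1..k data by the conventions
   n_0 = 0, rho_0 = 1, w_0 = 1, rho_(k+1) = 0. *)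
Definition rhoE (k : nat) (rho : nat -> R) (j : nat) : R :=
  match j with
  | O => 1
  | _ => if Nat.eqb j (S k) then 0 else rho j
  end.
Definition wE (w : nat -> R) (j : nat) : R :=
  match j with O => 1 | _ => w j end.

Definition sum_n1 (n : nat -> nat) (m : nat) : R :=
  sum_lt (fun j => INR (n (S j))) m.

Definition MSE (k : nat) (p sigma2 : R) (n : nat -> nat) (rho w : nat -> R) : R :=
  sigma2 / (p - sum_n1 n k) *
  (sum_lt (fun j => sqrt (wE w j * ((rhoE k rho j)^2 - (rhoE k rho (S j))^2))) (S k))^2.

Definition p_red (p : R) (n : nat -> nat) (m : nat) : R := p - sum_n1 n m.

Definition kappa (k : nat) (rho w : nat -> R) (m : nat) : R :=
  sum_lt (fun j => wE w j * (1 - (rhoE k rho (S j))^2)) m.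

Definition C2_pos (f : R -> R) : Prop :=
  forall x, 0 < x ->
    ex_derive f x /\ ex_derive (Derive f) x /\ continuous (Derive_n f 2) x.

Definition nonincreasing_pos (f : R -> R) : Prop :=
  forall x y, 0 < x -> x <= y -> f y <= f x.
Definition nondecreasing_pos (f : R -> R) : Prop :=
  forall x y, 0 < x -> x <= y -> f x <= f y.

(* Main.v *)
Require Import Defs.
From Stdlib Require Import Reals Lra Lia.
From Coquelicot Require Import Coquelicot.
Open Scope R_scope.

Lemma sum_lt_le (f g : nat -> R) m :
  (forall j, (j < m)%nat -> f j <= g j) -> sum_lt f m <= sum_lt g m.
Proof.
  induction m as [|m IH]; intros H; simpl; [lra|].
  assert (sum_lt f m <= sum_lt g m) by (apply IH; intros; apply H; lia).
  assert (f m <= g m) by (apply H; lia). lra.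
Qed.

Lemma sum_lt_ext (f g : nat -> R) m :
  (forall j, (j < m)%nat -> f j = g j) -> sum_lt f m = sum_lt g m.
Proof.
  induction m as [|m IH]; intros H; simpl; [lra|].
  rewrite IH by (intros; apply H; lia). rewrite (H m) by lia. lra.
Qed.

Lemma sum_sq_nonneg (a : nat -> R) m : 0 <= sum_lt (fun j => (a j)^2) m.
Proof. induction m as [|m IH]; simpl; [lra|]. pose proof (pow2_ge_0 (a m)). simpl in *. nra. Qed.

Lemma cs (a : nat -> R) m :
  (sum_lt a m)^2 <= INR m * sum_lt (fun j => (a j)^2) m.
Proof.
  induction m as [|m IH]; cbn [sum_lt].
  - simpl. lra.
  - set (S0 := sum_lt a m) in *. set (Q := sum_lt (fun j => (a j)^2) m) in *.
    assert (HQ : 0 <= Q) by apply sum_sq_nonneg.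
    rewrite S_INR. set (x := a m).
    destruct m as [|m'].
    + unfold S0; simpl. lra.
    + assert (Hm : 0 < INR (S m')) by (apply lt_0_INR; lia).
      set (M := INR (S m')) in *.
      assert (H1 : M * ((M+1)*(Q + x^2) - (S0 + x)^2) >= 0).
      { assert (0 <= (S0 - M*x)^2) by apply pow2_ge_0.
        assert (M*(M*Q) >= M * S0^2) by nra. nra. }
      assert (0 <= (M+1)*(Q + x^2) - (S0 + x)^2).
      { destruct (Rle_or_lt 0 ((M+1)*(Q + x^2) - (S0 + x)^2)); auto. nra. }
      change (sum_lt (fun j => a j * (a j * 1)) (S m')) with Q. change (x * (x * 1)) with (x ^ 2). lra.
Qed.

Lemma rhoE_mid k rho j : (1 <= j <= k)%nat -> rhoE k rho j = rho j.
Proof.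
  intros H. destruct j as [|j]; [lia|]. unfold rhoE.
  destruct (Nat.eqb (S j) (S k)) eqn:E; auto.
  apply Nat.eqb_eq in E. lia.
Qed.

Lemma rhoE_last k rho : rhoE k rho (S k) = 0.
Proof. unfold rhoE. rewrite Nat.eqb_refl. reflexivity. Qed.

Theorem lemma1 (k : nat) (p sigma2 : R) (n : nat -> nat) (rho w : nat -> R)
  (ca cc : nat -> R) (ra rc : nat -> R -> R) :
  (1 <= k)%nat ->
  0 < p ->
  0 < sigma2 ->
  (forall j, (1 <= j <= k)%nat -> (0 < n j)%nat) ->
  0 < p - sum_n1 n k ->
  (forall j, (1 <= j <= k)%nat -> -1 <= rho j <= 1) ->
  (forall j, (1 <= j <= k)%nat -> 0 < w j) ->
  (forall j, (j < k)%nat -> Rabs (rhoE k rho (S j)) < Rabs (rhoE k rho j)) ->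
  (forall j, (1 <= j <= k)%nat ->
     0 < ca j /\ 0 < cc j /\
     (forall x, 0 < x -> 0 < ra j x) /\ nonincreasing_pos (ra j) /\ C2_pos (ra j) /\
     (forall x, 0 < x -> 0 < rc j x) /\ nondecreasing_pos (rc j) /\ C2_pos (rc j) /\
     1 - (rho j)^2 <= ca j * ra j (INR (n j)) /\
     w j <= cc j * rc j (INR (n j))) ->
  MSE k p sigma2 n rho w <=
    INR (S k) * sigma2 / (p_red p n (k - 1) - INR (n k)) *
    (kappa k rho w (k - 1) + wE w (k - 1) * ca k * ra k (INR (n k))
     + cc k * rc k (INR (n k))).
Proof.
  intros Hk Hp Hs Hn HD Hrho Hw Habs Hr.
  assert (Hsq1 : forall j, (j <= k)%nat -> (rhoE k rho j)^2 <= 1).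
  { intros j Hj. destruct j as [|j]. simpl. lra.
    rewrite rhoE_mid by lia. destruct (Hrho (S j)) as [A B]; [lia|]. nra. }
  assert (Hdec : forall j, (j <= k)%nat -> (rhoE k rho (S j))^2 <= (rhoE k rho j)^2).
  { intros j Hj. destruct (Nat.eq_dec j k) as [->|Hne].
    - rewrite rhoE_last. nra.
    - assert (Ha := Habs j ltac:(lia)).
      rewrite <- (pow2_abs (rhoE k rho (S j))), <- (pow2_abs (rhoE k rho j)).
      pose proof (Rabs_pos (rhoE k rho (S j))). apply pow_incr. lra. }
  assert (HwE : forall j, (j <= k)%nat -> 0 <= wE w j).
  { intros j Hj. destruct j; simpl. lra. apply Rlt_le, Hw; lia. }
  set (y := fun j => wE w j * ((rhoE k rho j)^2 - (rhoE k rho (S j))^2)).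
  assert (Hy : forall j, (j <= k)%nat -> 0 <= y j).
  { intros j Hj. unfold y. apply Rmult_le_pos. auto. specialize (Hdec j Hj). lra. }
  assert (HT : (sum_lt (fun j => sqrt (y j)) (S k))^2 <= INR (S k) * sum_lt y (S k)).
  { eapply Rle_trans. apply cs. right. f_equal. apply sum_lt_ext.
    intros j Hj. simpl. rewrite Rmult_1_r. apply sqrt_sqrt. apply Hy. lia. }
  destruct k as [|m]; [lia|].
  replace (S m - 1)%nat with m by lia.
  destruct (Hr (S m)) as (Hca & Hcc & _ & _ & _ & _ & _ & _ & Hra & Hrc); [lia|].
  assert (HB : sum_lt y (S (S m)) <=
     kappa (S m) rho w m + wE w m * ca (S m) * ra (S m) (INR (n (S m)))
     + cc (S m) * rc (S m) (INR (n (S m)))).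
  { simpl sum_lt at 1. unfold kappa.
    assert (sum_lt y m <= sum_lt (fun j => wE w j * (1 - rhoE (S m) rho (S j) ^ 2)) m).
    { apply sum_lt_le. intros j Hj. unfold y. apply Rmult_le_compat_l. apply HwE; lia.
      specialize (Hsq1 j ltac:(lia)). lra. }
    assert (y m <= wE w m * ca (S m) * ra (S m) (INR (n (S m)))).
    { unfold y. rewrite Rmult_assoc. apply Rmult_le_compat_l. apply HwE; lia.
      rewrite (rhoE_mid (S m) rho (S m)) by lia.
      specialize (Hsq1 m ltac:(lia)). lra. }
    assert (y (S m) <= cc (S m) * rc (S m) (INR (n (S m)))).
    { unfold y. rewrite rhoE_last, (rhoE_mid (S m) rho (S m)) by lia.
      simpl wE. destruct (Hrho (S m)) as [A B]; [lia|].
      assert (0 < w (S m)) by (apply Hw; lia).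
      assert (rho (S m) ^ 2 <= 1) by (pose proof (Hsq1 (S m) ltac:(lia)) as Q; rewrite rhoE_mid in Q by lia; exact Q).
      assert (w (S m) * (rho (S m) ^ 2 - 0 ^ 2) <= w (S m) * 1) by (apply Rmult_le_compat_l; simpl; lra). lra. }
    lra. }
  unfold MSE.
  assert (HDeq : p_red p n m - INR (n (S m)) = p - sum_n1 n (S m)).
  { unfold p_red, sum_n1. simpl. ring. }
  rewrite HDeq.
  fold y.
  set (D := p - sum_n1 n (S m)) in *.
  set (B := kappa (S m) rho w m + wE w m * ca (S m) * ra (S m) (INR (n (S m)))
     + cc (S m) * rc (S m) (INR (n (S m)))) in *.
  replace (INR (S (S m)) * sigma2 / D * B) with (sigma2 / D * (INR (S (S m)) * B))
    by (field; lra).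
  apply Rmult_le_compat_l.
  - apply Rlt_le. apply Rdiv_lt_0_compat; lra.
  - eapply Rle_trans. apply HT. apply Rmult_le_compat_l. apply pos_INR. exact HB.
Qed.
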